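(* Let $\mu\ge0$ be an integer and let $\gamma\ge0$, $m\ge\gamma$ and $0\le\lambda\le\gamma$ be integers. Then the function $$\mathsf{M}^{(\mu)}_m(\lambda)=\frac{1}{2\pi^{3/2}}\frac{(4\lambda+4\mu+1)\Gamma(\lambda+\frac12)\Gamma(2\mu+\frac12)\Gamma(\lambda+\mu+\frac12)}{\Gamma(\lambda+\mu+1)\Gamma(\lambda+2\mu+1)}\cdot\frac{(2\mu+2m+1)\Gamma(m-\lambda+\frac12)\Gamma(m+\lambda+2\mu+1)}{\Gamma(m-\lambda+1)\Gamma(m+\lambda+2\mu+\frac32)}$$ is decreasing with respect to $m$. *)

(* Defs.v *)
From Stdlib Require Import Reals.
From Coquelicot Require Import Coquelicot.
Open Scope R_scope.

Definition Gamma (x : R) : R :=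
  RInt_gen (fun t => Rpower t (x - 1) * exp (- t)) (at_right 0) (Rbar_locally p_infty).

Definition Mfun (mu m lam : nat) : R :=
  let mu' := INR mu in let m' := INR m in let l := INR lam in
  / (2 * Rpower PI (3/2)) *
  ((4 * l + 4 * mu' + 1) * Gamma (l + 1/2) * Gamma (2 * mu' + 1/2)
     * Gamma (l + mu' + 1/2)
   / (Gamma (l + mu' + 1) * Gamma (l + 2 * mu' + 1)))
  * ((2 * mu' + 2 * m' + 1) * Gamma (m' - l + 1/2) * Gamma (m' + l + 2 * mu' + 1)
     / (Gamma (m' - l + 1) * Gamma (m' + l + 2 * mu' + 3/2))).

(* Main.v *)
Require Import Defs.
From Stdlib Require Import Reals.
From Stdlib Require Import Lra Psatz Classical.
From Coquelicot Require Import Coquelicot.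
Open Scope R_scope.

Lemma ball_R (x e y : R) : Rabs (y - x) < e -> ball x e y.
Proof. intros H. unfold ball; simpl. unfold AbsRing_ball, abs, minus, plus, opp; simpl. exact H. Qed.

Lemma ball_R' (x e y : R) : ball x e y -> Rabs (y - x) < e.
Proof. intros H. unfold ball in H; simpl in H. unfold AbsRing_ball, abs, minus, plus, opp in H; simpl in H. exact H. Qed.

Lemma right_ex (f : R -> R) (c C : R) :
  (forall t, c <= t -> 0 <= f t) -> (forall t, c <= t -> continuous f t) ->
  (forall b, c <= b -> RInt f c b <= C) ->
  exists L, is_RInt_gen f (at_point c) (Rbar_locally p_infty) L /\
            (forall b, c <= b -> RInt f c b <= L).
Proof.
  intros Hpos Hcont Hbd.
  assert (Hex : forall a b, c <= a <= b -> ex_RInt f a b).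
  { intros a b Hab. apply (@ex_RInt_continuous R_CompleteNormedModule). intros z Hz.
    rewrite Rmin_left in Hz by lra. rewrite Rmax_right in Hz by lra. apply Hcont; lra. }
  set (E := fun y => exists b, c <= b /\ y = RInt f c b).
  destruct (completeness E) as [L [Hub Hlub]].
  { exists C. intros y [b [Hb ->]]. now apply Hbd. }
  { exists (RInt f c c), c. split; [lra|reflexivity]. }
  exists L. split.
  - intros P [eps HP].
    destruct (classic (exists b0, c <= b0 /\ L - eps < RInt f c b0)) as [[b0 [Hb0 Hlt]]|Hno].
    2:{ exfalso. assert (L <= L - eps).
        { apply Hlub. intros y [b [Hb ->]]. apply Rnot_lt_le. intros Hc. apply Hno. exists b; split; auto. }
        destruct eps; simpl in *; lra. }
    apply (Filter_prod _ _ _ (fun x => x = c) (fun y => b0 < y)); [reflexivity| exists b0; auto|].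
    intros x y -> Hy. exists (RInt f c y). split.
    + apply (@RInt_correct R_CompleteNormedModule). apply Hex; lra.
    + apply HP. apply ball_R.
      assert (Hch : RInt f c b0 + RInt f b0 y = RInt f c y).
      { apply (@RInt_Chasles R_CompleteNormedModule f c b0 y); apply Hex; lra. }
      assert (0 <= RInt f b0 y).
      { apply RInt_ge_0; [lra| apply Hex; lra| intros; apply Hpos; lra]. }
      assert (RInt f c y <= L). { apply Hub. exists y; split; auto; lra. }
      apply Rabs_def1; lra.
  - intros b Hb. apply Hub. exists b; auto.
Qed.

Lemma left_ex (f : R -> R) (c C : R) : 0 < c ->
  (forall t, 0 < t <= c -> 0 <= f t) -> (forall t, 0 < t <= c -> continuous f t) ->
  (forall a, 0 < a <= c -> RInt f a c <= C) ->
  exists L, is_RInt_gen f (at_right 0) (at_point c) L /\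
            (forall a, 0 < a <= c -> RInt f a c <= L).
Proof.
  intros Hc Hpos Hcont Hbd.
  assert (Hex : forall a b, 0 < a <= b -> b <= c -> ex_RInt f a b).
  { intros a b Hab Hbc. apply (@ex_RInt_continuous R_CompleteNormedModule). intros z Hz.
    rewrite Rmin_left in Hz by lra. rewrite Rmax_right in Hz by lra. apply Hcont; lra. }
  set (E := fun y => exists a, 0 < a <= c /\ y = RInt f a c).
  destruct (completeness E) as [L [Hub Hlub]].
  { exists C. intros y [b [Hb ->]]. now apply Hbd. }
  { exists (RInt f c c), c. split; [lra|reflexivity]. }
  exists L. split.
  - intros P [eps HP].
    destruct (classic (exists a0, 0 < a0 <= c /\ L - eps < RInt f a0 c)) as [[a0 [Ha0 Hlt]]|Hno].
    2:{ exfalso. assert (L <= L - eps).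
        { apply Hlub. intros y [b [Hb ->]]. apply Rnot_lt_le. intros Hc'. apply Hno. exists b; split; auto. }
        destruct eps; simpl in *; lra. }
    apply (Filter_prod _ _ _ (fun x => 0 < x <= a0) (fun y => y = c)).
    { assert (Ha0p : 0 < a0) by lra. exists (mkposreal a0 Ha0p). intros u Hu Hu0.
      apply ball_R' in Hu. simpl in Hu. rewrite Rminus_0_r in Hu.
      apply Rabs_def2 in Hu. lra. }
    { reflexivity. }
    intros x y Hx ->. exists (RInt f x c). split.
    + apply (@RInt_correct R_CompleteNormedModule). apply Hex; lra.
    + apply HP. apply ball_R.
      assert (Hch : RInt f x a0 + RInt f a0 c = RInt f x c).
      { apply (@RInt_Chasles R_CompleteNormedModule f x a0 c); apply Hex; lra. }
      assert (0 <= RInt f x a0).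
      { apply RInt_ge_0; [lra| apply Hex; lra| intros; apply Hpos; lra]. }
      assert (RInt f x c <= L). { apply Hub. exists x; split; auto; lra. }
      apply Rabs_def1; lra.
  - intros b Hb. apply Hub. exists b; auto.
Qed.

Definition h (x t : R) : R := Rpower t (x - 1) * exp (- t).

Lemma exp_le' a b : a <= b -> exp a <= exp b.
Proof. intros H; destruct (Req_dec a b) as [->|n]; [lra| apply Rlt_le, exp_increasing; lra]. Qed.

Lemma ln_le_sqrt t : 0 < t -> ln t <= 2 * (sqrt t - 1).
Proof.
  intros Ht. assert (Hs : 0 < sqrt t) by (apply sqrt_lt_R0; lra).
  assert (ln t = 2 * ln (sqrt t)).
  { rewrite <- (sqrt_sqrt t) at 1 by lra. rewrite ln_mult by lra. ring. }
  rewrite H. pose proof (exp_ineq1_le (ln (sqrt t))). rewrite exp_ln in H0 by lra. lra.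
Qed.

Lemma bound_inf y t : 1 <= t -> y * ln t - t <= 2 * y ^ 2 - t / 2.
Proof.
  intros Ht. pose proof (ln_le_sqrt t ltac:(lra)) as H1.
  assert (H0 : 0 <= ln t) by (rewrite <- ln_1; apply ln_le; lra).
  assert (Hs : sqrt t * sqrt t = t) by (apply sqrt_sqrt; lra).
  assert (0 <= sqrt t) by apply sqrt_pos.
  destruct (Rle_lt_dec 0 y).
  - assert (y * ln t <= y * (2 * (sqrt t - 1))) by (apply Rmult_le_compat_l; lra).
    assert (0 <= (y - sqrt t / 2) ^ 2) by apply pow2_ge_0.
    nra.
  - assert (y * ln t <= 0) by nra. assert (0 <= y ^ 2) by apply pow2_ge_0. nra.
Qed.

Lemma h_pos x t : 0 < h x t.
Proof. unfold h, Rpower. apply Rmult_lt_0_compat; apply exp_pos. Qed.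

Lemma h_cont x t : 0 < t -> continuous (h x) t.
Proof.
  intros Ht. apply (@ex_derive_continuous R_AbsRing R_NormedModule). unfold h, Rpower. auto_derive. lra.
Qed.

Lemma Rpower_cont y t : 0 < t -> continuous (fun t => Rpower t y) t.
Proof.
  intros Ht. apply (@ex_derive_continuous R_AbsRing R_NormedModule). unfold Rpower. auto_derive. lra.
Qed.

Lemma exH_ex x a b : 0 < a <= b -> ex_RInt (h x) a b.
Proof.
  intros Hab. apply (@ex_RInt_continuous R_CompleteNormedModule). intros z Hz.
  rewrite Rmin_left in Hz by lra. apply h_cont; lra.
Qed.

Lemma h_left x a : 0 < x -> 0 < a <= 1 -> RInt (h x) a 1 <= / x.
Proof.
  intros Hx Ha.
  assert (Hd : forall t, 0 < t -> is_derive (fun t => Rpower t x / x) t (Rpower t (x - 1))).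
  { intros t Ht. unfold Rpower. auto_derive. lra.
    replace ((x-1)*ln t) with (x*ln t + - ln t) by ring.
    rewrite exp_plus, exp_Ropp, exp_ln by lra. field; lra. }
  assert (Hi : is_RInt (fun t => Rpower t (x - 1)) a 1 (minus (Rpower 1 x / x) (Rpower a x / x))).
  { apply (@is_RInt_derive R_CompleteNormedModule (fun t => Rpower t x / x)).
    - intros z Hz. rewrite Rmin_left in Hz by lra. apply Hd; lra.
    - intros z Hz. rewrite Rmin_left in Hz by lra. apply Rpower_cont; lra. }
  assert (Hex : ex_RInt (fun t => Rpower t (x - 1)) a 1) by (eexists; exact Hi).
  apply Rle_trans with (RInt (fun t => Rpower t (x - 1)) a 1).
  { apply RInt_le; [lra| apply exH_ex; lra| exact Hex|].
    intros t Ht. unfold h. rewrite <- (Rmult_1_r (Rpower t (x-1))) at 2.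
    apply Rmult_le_compat_l. unfold Rpower; apply Rlt_le, exp_pos.
    rewrite <- exp_0. apply exp_le'. lra. }
  rewrite (is_RInt_unique _ _ _ _ Hi). unfold minus, plus, opp; simpl.
  assert (Rpower 1 x = 1) by (unfold Rpower; rewrite ln_1, Rmult_0_r; apply exp_0).
  rewrite H. assert (0 < Rpower a x) by (unfold Rpower; apply exp_pos).
  assert (0 < / x) by (apply Rinv_0_lt_compat; lra).
  unfold Rdiv. nra.
Qed.

Lemma h_right x b : 1 <= b -> RInt (h x) 1 b <= 2 * exp (2 * (x - 1) ^ 2).
Proof.
  intros Hb. set (K := exp (2 * (x - 1) ^ 2)).
  assert (HK : 0 < K) by apply exp_pos.
  assert (Hi : is_RInt (fun t => K * exp (- t / 2)) 1 b
                 (minus (- 2 * K * exp (- b / 2)) (- 2 * K * exp (- 1 / 2)))).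
  { apply (@is_RInt_derive R_CompleteNormedModule (fun t => - 2 * K * exp (- t / 2))).
    - intros z Hz. auto_derive; auto. replace (exp (- z * / 2)) with (exp (- z / 2)) by (f_equal; field). field.
    - intros z Hz. apply (@ex_derive_continuous R_AbsRing R_NormedModule). auto_derive. auto. }
  assert (Hex : ex_RInt (fun t => K * exp (- t / 2)) 1 b) by (eexists; exact Hi).
  apply Rle_trans with (RInt (fun t => K * exp (- t / 2)) 1 b).
  { apply RInt_le; [lra| apply exH_ex; lra| exact Hex|].
    intros t Ht. unfold h, K, Rpower. rewrite <- !exp_plus. apply exp_le'.
    pose proof (bound_inf (x - 1) t ltac:(lra)). lra. }
  rewrite (is_RInt_unique _ _ _ _ Hi). unfold minus, plus, opp; simpl.
  assert (0 < exp (- b / 2)) by apply exp_pos.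
  assert (exp (- 1 / 2) <= 1) by (rewrite <- exp_0; apply exp_le'; lra).
  nra.
Qed.


Lemma Gamma_spec x : 0 < x ->
  is_RInt_gen (h x) (at_right 0) (Rbar_locally p_infty) (Gamma x) /\ 0 < Gamma x.
Proof.
  intros Hx.
  destruct (left_ex (h x) 1 (/ x) ltac:(lra)) as [L1 [H1 B1]].
  { intros; apply Rlt_le, h_pos. }
  { intros; apply h_cont; lra. }
  { intros; apply h_left; auto. }
  destruct (right_ex (h x) 1 (2 * exp (2 * (x - 1) ^ 2))) as [L2 [H2 B2]].
  { intros; apply Rlt_le, h_pos. }
  { intros; apply h_cont; lra. }
  { intros; apply h_right; auto. }
  pose proof (is_RInt_gen_Chasles (h x) 1 L1 L2 H1 H2) as H.
  assert (E : Gamma x = plus L1 L2).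
  { unfold Gamma. apply (is_RInt_gen_unique (h x)). exact H. }
  rewrite E. split; [exact H|].
  unfold plus; simpl.
  assert (0 <= RInt (h x) (1/2) 1).
  { apply RInt_ge_0; [lra| apply exH_ex; lra|]. intros; apply Rlt_le, h_pos. }
  assert (0 < RInt (h x) 1 2).
  { apply Rle_lt_trans with (RInt (fun _ => 0) 1 2).
    { rewrite RInt_const. unfold scal; simpl; unfold mult; simpl. lra. }
    apply RInt_lt; [lra| intros; apply h_cont; lra| intros; apply continuous_const|].
    intros; apply h_pos. }
  specialize (B1 (1/2) ltac:(lra)). specialize (B2 2 ltac:(lra)). lra.
Qed.

Lemma at_right_pos : at_right 0 (fun a => 0 < a).
Proof. exists (mkposreal 1 Rlt_0_1). intros; auto. Qed.

Lemma Gamma_succ x : 0 < x -> Gamma (x + 1) = x * Gamma x.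
Proof.
  intros Hx. destruct (Gamma_spec x Hx) as [Hg _].
  set (F := fun t => - (Rpower t x * exp (- t))).
  set (dF := fun t => Rpower t x * exp (- t) - x * (Rpower t (x - 1) * exp (- t))).
  assert (HdF : forall t, 0 < t -> is_derive F t (dF t)).
  { intros t Ht. unfold F, dF, Rpower. auto_derive. lra.
    replace ((x-1)*ln t) with (x*ln t + - ln t) by ring.
    rewrite exp_plus, (exp_Ropp (ln t)), exp_ln by lra. field; lra. }
  assert (HD : forall t, 0 < t -> Derive F t = dF t).
  { intros; apply is_derive_unique, HdF; auto. }
  assert (Hprod : filter_prod (at_right 0) (Rbar_locally p_infty)
                    (fun ab => forall z, Rmin (fst ab) (snd ab) <= z -> 0 < z)).
  { apply (Filter_prod _ _ _ (fun a => 0 < a) (fun b => 0 < b)).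
    - apply at_right_pos.
    - exists 0; auto.
    - intros a b Ha Hb z Hz. simpl in Hz. pose proof (Rmin_glb_lt a b 0 Ha Hb). lra. }
  assert (Hint : is_RInt_gen (Derive F) (at_right 0) (Rbar_locally p_infty) (0 - 0)).
  { apply is_RInt_gen_Derive.
    - eapply filter_imp; [|exact Hprod]. intros [a b] Hab z Hz. eexists. apply HdF, (Hab z). apply Hz.
    - eapply filter_imp; [|exact Hprod]. intros [a b] Hab z Hz.
      apply (continuous_ext_loc _ dF).
      + assert (Hz0 : 0 < z) by (apply (Hab z), Hz).
        eapply filter_imp; [|apply (open_gt 0 z Hz0)]. intros u Hu. simpl in Hu. symmetry; apply HD; auto.
      + apply (@ex_derive_continuous R_AbsRing R_NormedModule). assert (0 < z) by (apply (Hab z), Hz).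
        unfold dF, Rpower. auto_derive. repeat split; lra.
    - apply filterlim_locally. intros eps.
      assert (Hd : 0 < exp (ln eps / x)) by apply exp_pos.
      exists (mkposreal _ Hd). intros t Ht Htp. apply ball_R' in Ht. simpl in Ht.
      apply ball_R. unfold F, Rpower.
      rewrite Rminus_0_r in Ht. rewrite Rabs_right in Ht by lra.
      assert (Hl : ln t < ln eps / x) by (rewrite <- (ln_exp (ln eps / x)); apply ln_increasing; lra).
      assert (x * ln t < ln eps).
      { assert (Ex : x * (ln eps / x) = ln eps) by (field; lra).
        apply Rmult_lt_compat_l with (r := x) in Hl; auto. rewrite Ex in Hl. exact Hl. }
      rewrite Rminus_0_r, Rabs_Ropp, Rabs_right.
      2:{ apply Rle_ge, Rlt_le, Rmult_lt_0_compat; apply exp_pos. }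
      rewrite <- exp_plus. rewrite <- (exp_ln eps) by apply cond_pos.
      apply exp_increasing. lra.
    - apply filterlim_locally. intros eps.
      exists (Rmax 1 (2 * (2 * x ^ 2 - ln eps))). intros t Ht.
      assert (H1 : 1 < t) by (eapply Rle_lt_trans; [apply Rmax_l| exact Ht]).
      assert (H2 : 2 * (2 * x ^ 2 - ln eps) < t) by (eapply Rle_lt_trans; [apply Rmax_r| exact Ht]).
      apply ball_R. unfold F, Rpower.
      rewrite Rminus_0_r, Rabs_Ropp, Rabs_right.
      2:{ apply Rle_ge, Rlt_le, Rmult_lt_0_compat; apply exp_pos. }
      rewrite <- exp_plus. rewrite <- (exp_ln eps) by apply cond_pos.
      apply Rle_lt_trans with (exp (2 * x ^ 2 - t / 2)).
      + apply exp_le'. pose proof (bound_inf x t ltac:(lra)). lra.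
      + apply exp_increasing. lra. }
  pose proof (is_RInt_gen_scal _ x _ Hg) as Hs.
  pose proof (is_RInt_gen_plus _ _ _ _ Hint Hs) as Hp.
  assert (He : is_RInt_gen (h (x + 1)) (at_right 0) (Rbar_locally p_infty)
                 (plus (0 - 0) (scal x (Gamma x)))).
  { eapply is_RInt_gen_ext; [|exact Hp].
    eapply filter_imp; [|exact Hprod]. intros [a b] Hab z Hz.
    assert (Hz0 : 0 < z) by (apply (Hab z); apply Rlt_le, Hz).
    rewrite HD by auto. unfold dF, h, plus, scal; simpl. unfold mult; simpl.
    replace (x + 1 - 1) with x by ring. ring. }
  assert (Eg : Gamma (x + 1) = plus (0 - 0) (scal x (Gamma x))) by (apply (is_RInt_gen_unique (h (x + 1))); exact He). rewrite Eg.
  unfold plus, scal; simpl. unfold mult; simpl. ring.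
Qed.

Lemma Gpos x : 0 < x -> 0 < Gamma x.
Proof. intros; apply Gamma_spec; auto. Qed.

Lemma step mu m lam : (lam <= m)%nat -> Mfun mu (S m) lam <= Mfun mu m lam.
Proof.
  intros Hle. unfold Mfun. cbv zeta. rewrite S_INR.
  pose proof (le_INR _ _ Hle) as Hlm.
  set (l := INR lam) in *. set (u := INR mu). set (m' := INR m) in *.
  assert (Hl : 0 <= l) by apply pos_INR. assert (Hu : 0 <= u) by apply pos_INR.
  replace (m' + 1 - l + 1 / 2) with ((m' - l + 1/2) + 1) by ring.
  replace (m' + 1 + l + 2 * u + 1) with ((m' + l + 2 * u + 1) + 1) by ring.
  replace (m' + 1 - l + 1) with ((m' - l + 1) + 1) by ring.
  replace (m' + 1 + l + 2 * u + 3 / 2) with ((m' + l + 2 * u + 3 / 2) + 1) by ring.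
  rewrite (Gamma_succ (m' - l + 1/2)) by lra.
  rewrite (Gamma_succ (m' + l + 2 * u + 1)) by lra.
  rewrite (Gamma_succ (m' - l + 1)) by lra.
  rewrite (Gamma_succ (m' + l + 2 * u + 3 / 2)) by lra.
  assert (HP : 0 < / (2 * Rpower PI (3 / 2)) *
     ((4 * l + 4 * u + 1) * Gamma (l + 1 / 2) * Gamma (2 * u + 1 / 2) * Gamma (l + u + 1 / 2) /
      (Gamma (l + u + 1) * Gamma (l + 2 * u + 1)))).
  { assert (0 < Rpower PI (3/2)) by (unfold Rpower; apply exp_pos).
    assert (0 < Gamma (l + 1 / 2)) by (apply Gpos; lra).
    assert (0 < Gamma (2 * u + 1 / 2)) by (apply Gpos; lra).
    assert (0 < Gamma (l + u + 1 / 2)) by (apply Gpos; lra).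
    assert (0 < Gamma (l + u + 1)) by (apply Gpos; lra).
    assert (0 < Gamma (l + 2 * u + 1)) by (apply Gpos; lra).
    apply Rmult_lt_0_compat. apply Rinv_0_lt_compat; lra.
    unfold Rdiv. apply Rmult_lt_0_compat; [|apply Rinv_0_lt_compat, Rmult_lt_0_compat; auto].
    repeat apply Rmult_lt_0_compat; auto; lra. }
  apply Rmult_le_compat_l; [lra|].
  set (GA := Gamma (m' - l + 1 / 2)). set (GB := Gamma (m' + l + 2 * u + 1)).
  set (GC := Gamma (m' - l + 1)). set (GD := Gamma (m' + l + 2 * u + 3 / 2)).
  assert (0 < GA) by (apply Gpos; lra). assert (0 < GB) by (apply Gpos; lra).
  assert (0 < GC) by (apply Gpos; lra). assert (0 < GD) by (apply Gpos; lra).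
  set (Q := GA * GB / (GC * GD)).
  assert (HQ : 0 < Q) by (unfold Q, Rdiv; apply Rmult_lt_0_compat; [nra| apply Rinv_0_lt_compat; nra]).
  match goal with |- ?X <= ?Y =>
    replace X with (Q * (((m' - l) + (m' + l + 2 * u) + 3) * ((m' - l) + 1/2) * ((m' + l + 2 * u) + 1)
                         / (((m' - l) + 1) * ((m' + l + 2 * u) + 3/2))));
    [replace Y with (Q * ((m' - l) + (m' + l + 2 * u) + 1))|] end.
  3:{ unfold Q. field. repeat split; lra. }
  2:{ unfold Q. field. lra. }
  set (a := m' - l) in *. set (b := m' + l + 2 * u) in *.
  assert (Ha : 0 <= a) by (unfold a; lra). assert (Hba : a <= b) by (unfold a, b; lra).
  apply Rmult_le_compat_l; [lra|].
  apply Rle_div_l; [nra|].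
  assert (0 <= (b - a) ^ 2) by apply pow2_ge_0. nra.
Qed.

Theorem lemma5p5 (mu gamma lam : nat) (Hlam : (lam <= gamma)%nat) :
  forall m1 m2 : nat, (gamma <= m1)%nat -> (m1 <= m2)%nat ->
    Mfun mu m2 lam <= Mfun mu m1 lam.
Proof.
  intros m1 m2 Hg Hle. induction Hle.
  - lra.
  - apply Rle_trans with (Mfun mu m lam); auto. apply step. lia.
Qed.
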